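(* Let $\alpha=(n_1,m_1,\dots,n_p,m_p)\in\mathbb Z_{\ge0}^{2p}$, $a=(a_{hk})\in I(\alpha)$ and $i,j\in\{1,\dots,p\}$. (1) Suppose $a_{ij}=L_{ij}(\alpha,a)$. If $L_{ij}(\alpha,a)=m_j-\sum_{h=1}^{i-1}a_{hj}$, then $a_{qj}=0$ for all $q=i+1,\dots,p$. If $L_{ij}(\alpha,a)=n_i-\sum_{k=1}^{j-1}a_{ik}$, then $a_{it}=0$ for all $t=j+1,\dots,p$. (2) Suppose $a_{ij}=l_{ij}(\alpha,a)$ and $l_{ij}(\alpha,a)=\sum_{h=1}^i n_h-\sum_{h=j+1}^p m_h-\sum_{h\le i,\,k\le j,\,(h,k)\neq(i,j)}a_{hk}$. Then $a_{it}=m_t-\sum_{h=1}^{i-1}a_{ht}$ for all $t=j+1,\dots,p$; $a_{qj}=n_q-\sum_{k=1}^{j-1}a_{qk}$ for all $q=i+1,\dots,p$; and $a_{qt}=0$ for all $q=i+1,\dots,p$ and $t=j+1,\dots,p$.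
   Context: $I(\alpha)$ is the set of $a=(a_{11},\dots,a_{1p},a_{21},\dots,a_{pp})\in\mathbb Z_{\ge0}^{p^2}$ with $l_{ij}(\alpha,a)\le a_{ij}\le L_{ij}(\alpha,a)$ for all $i,j=1,\dots,p$, where $$l_{ij}(\alpha,a)=\max\Big(0,\ \sum_{h=1}^i n_h-\sum_{h=j+1}^p m_h-\sum_{\substack{h\le i,\,k\le j\\ (h,k)\neq(i,j)}}a_{hk}\Big),\qquad L_{ij}(\alpha,a)=\min\Big(n_i-\sum_{h=1}^{j-1}a_{ih},\ m_j-\sum_{h=1}^{i-1}a_{hj}\Big).$$ (The paper writes $\wedge$ for this max and $\vee$ for this min.) *)

(* Defs.v *)
(* Indices run over 1..p (natural numbers); the vector
   alpha = (n_1,m_1,...,n_p,m_p) is given by n m : nat -> nat and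
   a = (a_hk) by a : nat -> nat -> nat (values outside 1..p are irrelevant).
   l_ij and L_ij are computed in int (no truncated subtraction). *)
From mathcomp Require Import all_boot all_order all_algebra.
Set Implicit Arguments. Unset Strict Implicit. Unset Printing Implicit Defensive.
Import Order.TTheory GRing.Theory Num.Theory.
Local Open Scope ring_scope.

Definition lraw (p : nat) (n m : nat -> nat) (a : nat -> nat -> nat) (i j : nat) : int :=
  (\sum_(1 <= h < i.+1) (n h)%:Z) - (\sum_(j.+1 <= h < p.+1) (m h)%:Z)
  - \sum_(1 <= h < i.+1) \sum_(1 <= k < j.+1 | (h, k) != (i, j)) (a h k)%:Z.

Definition lij (p : nat) (n m : nat -> nat) (a : nat -> nat -> nat) (i j : nat) : int :=
  Num.max 0 (lraw p n m a i j).

Definition Lrow (n : nat -> nat) (a : nat -> nat -> nat) (i j : nat) : int :=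
  (n i)%:Z - \sum_(1 <= h < j) (a i h)%:Z.
Definition Lcol (m : nat -> nat) (a : nat -> nat -> nat) (i j : nat) : int :=
  (m j)%:Z - \sum_(1 <= h < i) (a h j)%:Z.

Definition Lij (n m : nat -> nat) (a : nat -> nat -> nat) (i j : nat) : int :=
  Num.min (Lrow n a i j) (Lcol m a i j).

Definition inI (p : nat) (n m : nat -> nat) (a : nat -> nat -> nat) : Prop :=
  forall i j, (1 <= i <= p)%N -> (1 <= j <= p)%N ->
    lij p n m a i j <= (a i j)%:Z <= Lij n m a i j.

(* Main.v *)
Require Import Defs.
From mathcomp Require Import all_boot all_order all_algebra.
From mathcomp Require Import zify ring lra.
Import Order.TTheory GRing.Theory Num.Theory.
Local Open Scope ring_scope.

Definition S2 (a : nat -> nat -> nat) (i j : nat) : int :=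
  \sum_(1 <= h < i.+1) \sum_(1 <= k < j.+1) (a h k)%:Z.

Lemma split_at (F : nat -> int) lo hi t : (lo <= t < hi)%N ->
  \sum_(lo <= k < hi) F k = \sum_(lo <= k < t) F k + F t + \sum_(t.+1 <= k < hi) F k.
Proof.
move=> /andP[h1 h2]; rewrite (@big_cat_nat _ _ _ t lo hi _ _ h1 (ltnW h2)) /= (big_ltn (F:=F) h2) addrA //.
Qed.

Lemma sum_nat_ge0 (F : nat -> nat) lo hi : 0 <= \sum_(lo <= k < hi) (F k)%:Z.
Proof. by apply: sumr_ge0 => k _. Qed.

Lemma sum_eq_pt (F G : nat -> int) lo hi t :
  (forall k, (lo <= k < hi)%N -> F k <= G k) ->
  \sum_(lo <= k < hi) G k <= \sum_(lo <= k < hi) F k ->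
  (lo <= t < hi)%N -> F t = G t.
Proof.
move=> H Hs Ht; move: Hs; rewrite (@split_at F _ _ _ Ht) (@split_at G _ _ _ Ht).
have := H t Ht.
have : \sum_(lo <= k < t) F k <= \sum_(lo <= k < t) G k.
  apply: ler_sum_nat => k /andP[k1 k2]; apply: H; move/andP: Ht => [? ?].
  by rewrite k1 (ltn_trans k2).
have : \sum_(t.+1 <= k < hi) F k <= \sum_(t.+1 <= k < hi) G k.
  apply: ler_sum_nat => k /andP[k1 k2]; apply: H; move/andP: Ht => [? ?].
  by rewrite k2 andbT (leq_trans _ (ltnW k1)).
lia.
Qed.

Lemma dsum_filter (a : nat -> nat -> nat) i j : (1 <= i)%N -> (1 <= j)%N ->
  \sum_(1 <= h < i.+1) \sum_(1 <= k < j.+1 | (h, k) != (i, j)) (a h k)%:Z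
  = S2 a i j - (a i j)%:Z.
Proof.
move=> hi hj; rewrite /S2 !big_nat_recr //=.
rewrite [X in _ + X = _]big_mkcond /= big_nat_recr //= eqxx /= addr0.
have -> : \sum_(1 <= i0 < j) (if (i, i0) != (i, j) then (a i i0)%:Z else 0)
        = \sum_(1 <= i0 < j) (a i i0)%:Z.
  apply: eq_big_nat => k /andP[_ kj].
  by rewrite xpair_eqE eqxx /= (ltn_eqF kj).
have -> : \sum_(1 <= i0 < i) \sum_(1 <= k < j.+1 | (i0, k) != (i, j)) (a i0 k)%:Z
   = \sum_(1 <= i0 < i) \sum_(1 <= k < j.+1) (a i0 k)%:Z.
  apply: eq_big_nat => h /andP[_ hlt]; apply: eq_bigl => k.
  by rewrite xpair_eqE (ltn_eqF hlt).
by rewrite addrA addrK.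
Qed.

Lemma recr_int (F : nat -> int) lo n : (lo <= n)%N ->
  \sum_(lo <= k < n.+1) F k = \sum_(lo <= k < n) F k + F n.
Proof. by move=> h; rewrite big_nat_recr. Qed.

Lemma cat_int (F : nat -> int) lo mid hi : (lo <= mid)%N -> (mid <= hi)%N ->
  \sum_(lo <= k < hi) F k = \sum_(lo <= k < mid) F k + \sum_(mid <= k < hi) F k.
Proof. by move=> h1 h2; rewrite (@big_cat_nat _ _ _ mid). Qed.

Ltac retype H := let T := type of H in
  match T with is_true (@Order.le _ _ ?x ?y) =>
    let H' := fresh "H" in have H' : ((x:int) <= (y:int))%R := H; clear H
  end.

Lemma minP' (x y z : int) : x <= Num.min y z -> x <= y /\ x <= z.
Proof. by rewrite le_min => /andP[]. Qed.

Lemma maxP' (x y z : int) : Num.max y z <= x -> y <= x /\ z <= x.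
Proof. by rewrite ge_max => /andP[]. Qed.

Lemma ub {p n m a i j} : inI p n m a -> (1 <= i <= p)%N -> (1 <= j <= p)%N ->
  \sum_(1 <= k < j.+1) (a i k)%:Z <= (n i)%:Z /\
  \sum_(1 <= h < i.+1) (a h j)%:Z <= (m j)%:Z.
Proof.
move=> HI Hi Hj; have /andP[_ ] := HI i j Hi Hj.
move=> /minP' []; rewrite /Lrow /Lcol => h1 h2.
move/andP: Hi => [i1 _]; move/andP: Hj => [j1 _].
rewrite !recr_int //=; split.
  lra.
lra.
Qed.

Lemma lb {p n m a i j} : inI p n m a -> (1 <= i <= p)%N -> (1 <= j <= p)%N ->
  (\sum_(1 <= h < i.+1) (n h)%:Z) - (\sum_(j.+1 <= h < p.+1) (m h)%:Z)
   <= S2 a i j.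
Proof.
move=> HI Hi Hj; have /andP[H _] := HI i j Hi Hj.
move: H; rewrite /lij => /maxP' [_].
move/andP: Hi => [i1 _]; move/andP: Hj => [j1 _].
rewrite /lraw dsum_filter //; lra.
Qed.

Theorem propositionA4 (p : nat) (n m : nat -> nat) (a : nat -> nat -> nat) (i j : nat) :
  inI p n m a -> (1 <= i <= p)%N -> (1 <= j <= p)%N ->
  (* (1) *)
  ((a i j)%:Z = Lij n m a i j ->
     (Lij n m a i j = Lcol m a i j ->
        forall q, (i < q <= p)%N -> a q j = 0%N) /\
     (Lij n m a i j = Lrow n a i j ->
        forall t, (j < t <= p)%N -> a i t = 0%N)) /\
  (* (2) *)
  ((a i j)%:Z = lij p n m a i j -> lij p n m a i j = lraw p n m a i j ->
     (forall t, (j < t <= p)%N -> (a i t)%:Z = Lcol m a i t) /\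
     (forall q, (i < q <= p)%N -> (a q j)%:Z = Lrow n a q j) /\
     (forall q t, (i < q <= p)%N -> (j < t <= p)%N -> a q t = 0%N)).
Proof.
move=> HI Hi Hj.
have /andP[i1 ip] := Hi; have /andP[j1 jp] := Hj.
have Pp : (1 <= p <= p)%N by rewrite leqnn andbT (leq_trans j1 jp).
split.
  move=> Hij; split.
    move=> HL q /andP[iq qp].
    have Hq : (1 <= q <= p)%N by rewrite qp andbT (leq_trans i1 (ltnW iq)).
    have /andP[_] := HI q j Hq Hj; move=> /minP' []; rewrite /Lcol => _ Hc.
    move: Hij; rewrite HL /Lcol => Hij.
    move: Hc; rewrite (@cat_int _ 1 i.+1 q) // recr_int //.
    move=> Hc; have H0 := sum_nat_ge0 (fun h => a h j) i.+1 q.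
    have : (a q j)%:Z <= 0 by lra.
    by rewrite lez_nat leqn0 => /eqP.
  move=> HL t /andP[jt tp].
  have Ht : (1 <= t <= p)%N by rewrite tp andbT (leq_trans j1 (ltnW jt)).
  have /andP[_] := HI i t Hi Ht; move=> /minP' []; rewrite /Lrow => Hc _.
  move: Hij; rewrite HL /Lrow => Hij.
  move: Hc; rewrite (@cat_int _ 1 j.+1 t) // recr_int //.
  move=> Hc; have H0 := sum_nat_ge0 (fun k => a i k) j.+1 t.
  have : (a i t)%:Z <= 0 by lra.
  by rewrite lez_nat leqn0 => /eqP.
move=> Hl Hr.
have HS : S2 a i j = (\sum_(1 <= h < i.+1) (n h)%:Z) - (\sum_(j.+1 <= h < p.+1) (m h)%:Z).
  move: Hr; rewrite -Hl /lraw dsum_filter //; lra.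
have Hcol : forall t, (j < t <= p)%N -> \sum_(1 <= h < i.+1) (a h t)%:Z = (m t)%:Z.
  move=> t Ht.
  have A := lb HI Hi Pp.
  rewrite (@big_geq _ _ _ p.+1 p.+1) // subr0 in A.
  have B : S2 a i p <= \sum_(1 <= h < i.+1) (n h)%:Z.
    apply: ler_sum_nat => h /andP[h1 h2].
    have Hh : (1 <= h <= p)%N by rewrite h1 (leq_trans _ ip).
    by have [] := ub HI Hh Pp.
  have C : S2 a i p = S2 a i j + \sum_(j.+1 <= k < p.+1) \sum_(1 <= h < i.+1) (a h k)%:Z.
    rewrite exchange_big_nat /S2 -big_split /=; apply: eq_big_nat => h _.
    by rewrite (@cat_int _ 1 j.+1 p.+1).
  apply: (@sum_eq_pt (fun t => \sum_(1 <= h < i.+1) (a h t)%:Z) (fun t => (m t)%:Z) j.+1 p.+1) => //.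
  - move=> k /andP[k1 k2].
    have Hk : (1 <= k <= p)%N by rewrite (leq_trans j1 (ltnW k1)).
    by have [] := ub HI Hi Hk.
  - lra.
split.
  move=> t Ht; have := Hcol t Ht; rewrite /Lcol recr_int //=; lra.
split.
  move=> q Hq.
  have A := lb HI Pp Hj.
  have C : S2 a p j = S2 a i j + \sum_(i.+1 <= h < p.+1) \sum_(1 <= k < j.+1) (a h k)%:Z.
    by rewrite /S2 (@cat_int _ 1 i.+1 p.+1).
  have D : \sum_(1 <= h < p.+1) (n h)%:Z = \sum_(1 <= h < i.+1) (n h)%:Z + \sum_(i.+1 <= h < p.+1) (n h)%:Z.
    by rewrite (@cat_int _ 1 i.+1 p.+1).
  have E : \sum_(1 <= k < j.+1) (a q k)%:Z = (n q)%:Z.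
    apply: (@sum_eq_pt (fun h => \sum_(1 <= k < j.+1) (a h k)%:Z) (fun h => (n h)%:Z) i.+1 p.+1) => //.
    - move=> h /andP[h1 h2].
      have Hh : (1 <= h <= p)%N by rewrite (leq_trans i1 (ltnW h1)).
      by have [] := ub HI Hh Hj.
    - lra.
  move: E; rewrite /Lrow recr_int //=; lra.
move=> q t Hq Ht.
have Hq' : (i.+1 <= q < p.+1)%N by [].
have Ht' : (1 <= t <= p)%N by move/andP: Ht => [jt tp]; rewrite tp andbT (leq_trans j1 (ltnW jt)).
have [_ Hc] := ub HI Pp Ht'.
move: Hc.
rewrite (@cat_int _ 1 i.+1 p.+1) //= (Hcol t Ht) (@split_at _ _ _ _ Hq').
move=> Hc.
have H0 := sum_nat_ge0 (fun h => a h t) i.+1 q.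
have H1 := sum_nat_ge0 (fun h => a h t) q.+1 p.+1.
have : (a q t)%:Z <= 0 by lra.
by rewrite lez_nat leqn0 => /eqP.
Qed.
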